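(* Let $X\overset{f}{\underset{g}{\rightrightarrows}}Y\xrightarrow{h}Z$ be a coequalizer diagram in $\mathbf{CLS}$ whose image in $\mathbf{Sets}$ is exact (i.e. $h$ is the coequalizer of $f,g$ as maps of sets and $(f,g)$ is the kernel pair of $h$ as maps of sets). If $f$ and $g$ are surjective closed maps, then $h$ is a surjective closed map; and if $f$ and $g$ are surjective open maps, then $h$ is a surjective open map.
   Context: A closure space is a pair $(A,\mathcal{C}_A)$ where $A$ is a set and $\mathcal{C}_A$ is a set of subsets of $A$ closed under arbitrary intersections (so $A\in\mathcal{C}_A$); elements of $\mathcal{C}_A$ are called closed, and their complements open. $\mathbf{CLS}$ has closure spaces as objects and, as morphisms $\alpha:A\to B$, maps with $\alpha^{-1}(B')\in\mathcal{C}_A$ for all $B'\in\mathcal{C}_B$. A morphism $p$ is closed if it maps closed sets to closed sets, and open if it maps open sets (complements of closed sets) to open sets. In a coequalizer $h$ in $\mathbf{CLS}$, $\mathcal{C}_Z=\{Z'\subseteq Z\mid h^{-1}(Z')\in\mathcal{C}_Y\}$. *)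

(* Defs.v *)
(* A closure system on A: a family C of subsets closed under arbitrary
   intersections (the empty intersection gives A itself). *)
Definition is_closure_space {A : Type} (C : (A -> Prop) -> Prop) : Prop :=
  forall F : (A -> Prop) -> Prop,
    (forall S, F S -> C S) -> C (fun a => forall S, F S -> S a).

Definition is_cls_morphism {A B : Type} (CA : (A -> Prop) -> Prop)
  (CB : (B -> Prop) -> Prop) (p : A -> B) : Prop :=
  forall S : B -> Prop, CB S -> CA (fun a => S (p a)).

Definition image {A B : Type} (p : A -> B) (S : A -> Prop) : B -> Prop :=
  fun b => exists a, S a /\ p a = b.

Definition compl {A : Type} (S : A -> Prop) : A -> Prop := fun a => ~ S a.

Definition closed_map {A B : Type} (CA : (A -> Prop) -> Prop)
  (CB : (B -> Prop) -> Prop) (p : A -> B) : Prop :=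
  forall S, CA S -> CB (image p S).

(* open map: images of open sets (complements of closed sets) are open,
   i.e. the complement of the image of the complement of a closed set is closed *)
Definition open_map {A B : Type} (CA : (A -> Prop) -> Prop)
  (CB : (B -> Prop) -> Prop) (p : A -> B) : Prop :=
  forall S, CA S -> CB (compl (image p (compl S))).

Definition surjective {A B : Type} (p : A -> B) : Prop :=
  forall b, exists a, p a = b.

Definition is_cls_coequalizer {X Y Z : Type}
  (CX : (X -> Prop) -> Prop) (CY : (Y -> Prop) -> Prop) (CZ : (Z -> Prop) -> Prop)
  (f g : X -> Y) (h : Y -> Z) : Prop :=
  is_closure_space CX /\ is_closure_space CY /\ is_closure_space CZ /\
  is_cls_morphism CX CY f /\ is_cls_morphism CX CY g /\ is_cls_morphism CY CZ h /\
  (forall x, h (f x) = h (g x)) /\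
  forall (W : Type) (CW : (W -> Prop) -> Prop), is_closure_space CW ->
    forall k : Y -> W, is_cls_morphism CY CW k -> (forall x, k (f x) = k (g x)) ->
      exists u : Z -> W, is_cls_morphism CZ CW u /\ (forall y, u (h y) = k y) /\
        forall u' : Z -> W, is_cls_morphism CZ CW u' -> (forall y, u' (h y) = k y) ->
          forall z, u' z = u z.

Definition is_set_coequalizer {X Y Z : Type} (f g : X -> Y) (h : Y -> Z) : Prop :=
  (forall x, h (f x) = h (g x)) /\
  forall (W : Type) (k : Y -> W), (forall x, k (f x) = k (g x)) ->
    exists u : Z -> W, (forall y, u (h y) = k y) /\
      forall u' : Z -> W, (forall y, u' (h y) = k y) -> forall z, u' z = u z.

Definition is_set_kernel_pair {X Y Z : Type} (f g : X -> Y) (h : Y -> Z) : Prop :=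
  (forall x, h (f x) = h (g x)) /\
  forall (V : Type) (a b : V -> Y), (forall v, h (a v) = h (b v)) ->
    exists u : V -> X, (forall v, f (u v) = a v /\ g (u v) = b v) /\
      forall u' : V -> X, (forall v, f (u' v) = a v /\ g (u' v) = b v) ->
        forall v, u' v = u v.

(* Main.v *)
Require Import Defs.
From Stdlib Require Import FunctionalExtensionality PropExtensionality.

Lemma ext_closed {A : Type} (C : (A -> Prop) -> Prop) (P Q : A -> Prop) :
  C P -> (forall a, P a <-> Q a) -> C Q.
Proof.
  intros H E. replace Q with P; auto.
  apply functional_extensionality; intro a; apply propositional_extensionality; auto.
Qed.

Lemma coeq_closed (X Y Z : Type)
  (CX : (X -> Prop) -> Prop) (CY : (Y -> Prop) -> Prop) (CZ : (Z -> Prop) -> Prop)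
  (f g : X -> Y) (h : Y -> Z) :
  is_cls_coequalizer CX CY CZ f g h -> surjective h ->
  forall S : Z -> Prop, CY (fun y => S (h y)) -> CZ S.
Proof.
  intros [_ [HY [_ [_ [_ [_ [Hfg U]]]]]]] Hs S HS.
  set (CW := fun T : Z -> Prop => CY (fun y => T (h y))).
  assert (HW : is_closure_space CW).
  { intros F HF. unfold CW.
    apply (ext_closed _ (fun y => forall T, (exists T', F T' /\ forall y, T y <-> T' (h y)) -> T y)).
    - apply HY. intros T [T' [H1 H2]]. apply (ext_closed CY (fun y => T' (h y)) T (HF T' H1)). intro a; rewrite (H2 a); tauto.
    - intro y; split.
      + intros H T FT. apply (H (fun y => T (h y))). exists T; split; auto. tauto.
      + intros H T [T' [H1 H2]]. apply H2. apply H; auto. }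
  destruct (U Z CW HW h (fun T HT => HT) Hfg) as [u [Hu [Huh _]]].
  assert (Hid : forall z, u z = z).
  { intro z. destruct (Hs z) as [y <-]. apply Huh. }
  apply (ext_closed _ _ _ (Hu S HS)). intro z; rewrite Hid; tauto.
Qed.

Lemma kp_use {X Y Z : Type} (f g : X -> Y) (h : Y -> Z) :
  is_set_kernel_pair f g h -> forall y' y, h y' = h y -> exists x, f x = y' /\ g x = y.
Proof.
  intros [_ K] y' y E.
  destruct (K unit (fun _ => y') (fun _ => y) (fun _ => E)) as [u [Hu _]].
  exists (u tt). apply (Hu tt).
Qed.

Lemma surj_h {X Y Z : Type} (f g : X -> Y) (h : Y -> Z) :
  is_set_coequalizer f g h -> surjective h.
Proof.
  intros [Hfg U] z.
  destruct (U Prop (fun _ => True) (fun x => eq_refl)) as [u [Hu Huniq]].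
  assert (H1 : forall z, (exists y, h y = z) = u z).
  { apply Huniq. intro y. apply propositional_extensionality.
    split; auto. intros _; exists y; reflexivity. }
  assert (H2 : forall z, True = u z) by (apply Huniq; auto).
  assert (E : (exists y, h y = z) = True) by (rewrite (H1 z), (H2 z); reflexivity).
  rewrite E; exact I.
Qed.

Theorem proposition6p4 (X Y Z : Type)
  (CX : (X -> Prop) -> Prop) (CY : (Y -> Prop) -> Prop) (CZ : (Z -> Prop) -> Prop)
  (f g : X -> Y) (h : Y -> Z) :
  is_cls_coequalizer CX CY CZ f g h ->
  is_set_coequalizer f g h ->
  is_set_kernel_pair f g h ->
  ((surjective f /\ closed_map CX CY f /\ surjective g /\ closed_map CX CY g) ->
     surjective h /\ closed_map CY CZ h) /\
  ((surjective f /\ open_map CX CY f /\ surjective g /\ open_map CX CY g) ->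
     surjective h /\ open_map CY CZ h).
Proof.
  intros HC HS HK.
  assert (Hs := surj_h f g h HS).
  assert (Hfg : forall x, h (f x) = h (g x)) by apply (proj1 HS).
  assert (Hf : is_cls_morphism CX CY f) by apply HC.
  split; intros [_ [Cf [_ Cg]]]; split; auto; intros S HSc;
    apply (coeq_closed X Y Z CX CY CZ f g h HC Hs).
  - apply (ext_closed _ _ _ (Cg _ (Hf S HSc))). intro y; split.
    + intros [x [Sx <-]]. exists (f x); split; auto.
    + intros [y' [Sy E]]. destruct (kp_use f g h HK y' y E) as [x [<- <-]].
      exists x; split; auto.
  - apply (ext_closed _ _ _ (Cg _ (Hf S HSc))). intro y; unfold compl, image; split.
    + intros H [y' [Sy E]]. destruct (kp_use f g h HK y' y E) as [x [<- <-]].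
      apply H; exists x; split; auto.
    + intros H [x [Sx <-]]. apply H. exists (f x); split; auto.
Qed.
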